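(* Let $R$ be a w-local ring. Then the functor sending a compactly generated Hausdorff space $X$ over $\pi_0|\operatorname{Spec} R|$ to its relative Betti stack $X^{\mathrm{B}/R}$ is fully faithful (as a functor to stacks over $R$).
   Context: A ring $R$ is w-local (Bhatt--Scholze) if $|\operatorname{Spec} R|$ is w-local: the subspace of closed points is closed and every connected component has a unique closed point. $\pi_0|\operatorname{Spec} R|$ is the (profinite) space of connected components. Stacks over $R$ are accessible fpqc sheaves on $R$-algebras. For a compactly generated Hausdorff space $X$ with a continuous map to $\pi_0|\operatorname{Spec}R|$, its relative Betti stack is $X^{\mathrm{B}/R}(S) := \operatorname{Map}_{\mathrm{Top}/\pi_0|\operatorname{Spec}R|}(|\operatorname{Spec} S|, X)$ for $R$-algebras $S$. *)

(* Defs.v *)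
From HB Require Import structures.
From mathcomp Require Import all_boot all_algebra.
From mathcomp Require Import boolp classical_sets topology.
Set Implicit Arguments. Unset Strict Implicit. Unset Printing Implicit Defensive.
Import GRing.Theory.
Local Open Scope classical_set_scope.
Local Open Scope ring_scope.

Definition prime_ideal (S : comPzRingType) (P : set S) : Prop :=
  [/\ P 0,
      (forall a b, P a -> P b -> P (a + b)),
      (forall a b, P b -> P (a * b)),
      ~ P 1 &
      (forall a b, P (a * b) -> P a \/ P b)].

Definition Spec (S : comPzRingType) := {P : set S | prime_ideal P}.

(** Zariski-open subsets: unions of basic opens D(a) = {p | a \notin p} *)
Definition Zopen (S : comPzRingType) (U : set (Spec S)) : Prop :=
  forall p, U p -> exists a : S, ~ (sval p) a /\ (forall q : Spec S, ~ (sval q) a -> U q).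

Definition Zclosed (S : comPzRingType) (A : set (Spec S)) : Prop := Zopen (~` A).

Lemma contract_prime (S T : comPzRingType) (f : {rmorphism S -> T}) (P : set T) :
  prime_ideal P -> prime_ideal (f @^-1` P).
Proof.
case=> P0 PD PM P1 Pp; split; rewrite /preimage /=.
- by rewrite rmorph0.
- by move=> a b Ha Hb; rewrite rmorphD; apply: PD.
- by move=> a b Hb; rewrite rmorphM; apply: PM.
- by rewrite rmorph1.
- by move=> a b; rewrite rmorphM; apply: Pp.
Qed.

Definition specmap (S T : comPzRingType) (f : {rmorphism S -> T}) (p : Spec T) : Spec S :=
  exist _ (f @^-1` sval p) (contract_prime f (svalP p)).

Definition Zcontinuous (S : comPzRingType) (X : topologicalType) (phi : Spec S -> X) : Prop :=
  forall A : set X, open A -> Zopen (phi @^-1` A).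

(** C is connected (in the subspace topology; the empty set counts as connected) *)
Definition Zconnected (R : comPzRingType) (C : set (Spec R)) : Prop :=
  forall U V : set (Spec R), Zopen U -> Zopen V ->
    C `<=` U `|` V -> C `&` U `&` V = set0 ->
    C `&` U = set0 \/ C `&` V = set0.

Definition Zcomponent (R : comPzRingType) (p : Spec R) : set (Spec R) :=
  fun q => exists C, Zconnected C /\ C p /\ C q.

Definition pi0 (R : comPzRingType) :=
  {C : set (Spec R) | exists p, C = Zcomponent p}.

Definition pi0_of (R : comPzRingType) (p : Spec R) : pi0 R :=
  exist _ (Zcomponent p) (ex_intro _ p erefl).

Definition pi0_open (R : comPzRingType) (V : set (pi0 R)) : Prop :=
  Zopen (@pi0_of R @^-1` V).

Definition pi0_continuous (R : comPzRingType) (X : topologicalType) (q : X -> pi0 R) : Prop :=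
  forall V, pi0_open V -> open (q @^-1` V).

Definition closed_point (R : comPzRingType) (p : Spec R) : Prop := Zclosed [set p].

Definition wlocal (R : comPzRingType) : Prop :=
  Zclosed (@closed_point R) /\
  forall c : pi0 R, exists! p : Spec R, sval c p /\ closed_point p.

Definition compactly_generated_hausdorff (X : topologicalType) : Prop :=
  hausdorff_space X /\
  forall A : set X, (forall K : set X, compact K -> closed (A `&` K)) -> closed A.

(** * Relative Betti stack
   For an R-algebra (S, f : R -> S), X^{B/R}(S) is the set of continuous maps
   phi : |Spec S| -> X over pi_0 |Spec R|, i.e. with q o phi = pi_0_of o Spec(f). *)
Definition relBetti (R : comPzRingType) (X : topologicalType) (q : X -> pi0 R)
  (S : comPzRingType) (f : {rmorphism R -> S}) (phi : Spec S -> X) : Prop :=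
  Zcontinuous phi /\ forall p : Spec S, q (phi p) = pi0_of (specmap f p).

(** A morphism of stacks X^{B/R} -> Y^{B/R} (these are set-valued sheaves, so a
   morphism is a natural transformation of functors on R-algebras). *)
Definition betti_morphism (R : comPzRingType) (X Y : topologicalType)
  (qX : X -> pi0 R) (qY : Y -> pi0 R)
  (eta : forall (S : comPzRingType) (f : {rmorphism R -> S}), (Spec S -> X) -> (Spec S -> Y))
  : Prop :=
  (forall S f phi, relBetti qX f phi -> relBetti qY f (eta S f phi)) /\
  (forall (S1 S2 : comPzRingType) (f1 : {rmorphism R -> S1}) (f2 : {rmorphism R -> S2})
          (h : {rmorphism S1 -> S2}),
     (forall r, h (f1 r) = f2 r) ->
     forall phi, relBetti qX f1 phi ->
       eta S2 f2 (phi \o specmap h) = eta S1 f1 phi \o specmap h).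

(* Main.v *)
Require Import Defs.
From HB Require Import structures.
From mathcomp Require Import all_boot all_algebra.
From mathcomp Require Import boolp classical_sets topology.
From mathcomp Require Import generic_quotient ring functions.
Set Implicit Arguments. Unset Strict Implicit. Unset Printing Implicit Defensive.
Import GRing.Theory.
Local Open Scope classical_set_scope.
Local Open Scope ring_scope.
Local Open Scope quotient_scope.

Definition ideal (S : comPzRingType) (I : set S) : Prop :=
  [/\ I 0, (forall a b, I a -> I b -> I (a + b)) & (forall a b, I b -> I (a * b))].

Lemma idealN (S : comPzRingType) (I : set S) : ideal I -> forall a, I a -> I (- a).
Proof. by case=> _ _ hM a Ia; rewrite -mulN1r; apply: hM. Qed.

Lemma idealB (S : comPzRingType) (I : set S) : ideal I -> forall a b, I a -> I b -> I (a - b).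
Proof. by move=> hI a b Ia Ib; have [_ hD _] := hI; apply: hD => //; apply: idealN. Qed.

Lemma prime_ideal_ideal (S : comPzRingType) (P : set S) : prime_ideal P -> ideal P.
Proof. by case. Qed.

Module RQ.
Section Quot.
Variables (S : comPzRingType) (I : set S) (hI : ideal I).

Definition equiv (x y : S) : bool := `[< I (x - y) >].

Lemma equivP x y : reflect (I (x - y)) (equiv x y).
Proof. exact: asboolP. Qed.

Lemma equiv_is_equiv : equiv_class_of equiv.
Proof.
split=> [x|x y|y x z].
- by apply/equivP; rewrite subrr; case: hI.
- apply/idP/idP => /equivP h; apply/equivP; rewrite -opprB; exact: idealN.
- move=> /equivP h1 /equivP h2; apply/equivP.
  have -> : x - z = (x - y) + (y - z) by rewrite addrA addrNK.
  by have [_ hD _] := hI; apply: hD.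
Qed.

Canonical equiv_equiv := EquivRelPack equiv_is_equiv.
Canonical equiv_encModRel := defaultEncModRel equiv.

Definition quot := (fun _ : ideal I => {eq_quot equiv}) hI.
HB.instance Definition _ : EqQuotient S equiv quot := EqQuotient.on quot.
HB.instance Definition _ := Choice.on quot.

Lemma eqmodP x y : reflect (I (x - y)) (x == y %[mod quot]).
Proof. by rewrite piE; exact: equivP. Qed.

Lemma reprP x : I (repr (\pi_quot x) - x).
Proof. apply/eqmodP; by rewrite reprK. Qed.

Definition zero : quot := lift_cst quot 0.
Definition add := lift_op2 quot +%R.
Definition opp := lift_op1 quot -%R.
Definition one : quot := lift_cst quot 1.
Definition mul := lift_op2 quot *%R.

Canonical pi_zero_morph := PiConst zero.
Canonical pi_one_morph := PiConst one.

Lemma pi_opp : {morph \pi : x / - x >-> opp x}.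
Proof.
move=> x; unlock opp; apply/eqP/eqmodP.
rewrite opprK addrC; exact: reprP.
Qed.
Canonical pi_opp_morph := PiMorph1 pi_opp.

Lemma pi_add : {morph \pi : x y / x + y >-> add x y}.
Proof.
move=> x y /=; unlock add; apply/eqP/eqmodP.
have -> : x + y - (repr (\pi_quot x) + repr (\pi_quot y)) =
   - ((repr (\pi_quot x) - x) + (repr (\pi_quot y) - y)).
  by ring.
apply: idealN => //; have [_ hD _] := hI; apply: hD; exact: reprP.
Qed.
Canonical pi_add_morph := PiMorph2 pi_add.

Lemma pi_mul: {morph \pi : x y / x * y >-> mul x y}.
Proof.
move=> x y; unlock mul; apply/eqP/eqmodP.
set a := repr (\pi_quot x); set b := repr (\pi_quot y).
have -> : x * y - a * b = - ((a - x) * y + a * (b - y)).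
  by ring.
apply: idealN => //; have [_ hD hM] := hI; apply: hD.
  by rewrite mulrC; apply: hM; exact: reprP.
by apply: hM; exact: reprP.
Qed.
Canonical pi_mul_morph := PiMorph2 pi_mul.

Lemma addqA: associative add.
Proof. by move=> x y z; rewrite -[x]reprK -[y]reprK -[z]reprK !piE addrA. Qed.
Lemma addqC: commutative add.
Proof. by move=> x y; rewrite -[x]reprK -[y]reprK !piE addrC. Qed.
Lemma add0q: left_id zero add.
Proof. by move=> x; rewrite -[x]reprK !piE add0r. Qed.
Lemma addNq: left_inverse zero opp add.
Proof. by move=> x; rewrite -[x]reprK !piE addNr. Qed.

HB.instance Definition _ := GRing.isZmodule.Build quot addqA addqC add0q addNq.

Lemma mulqA: associative mul.
Proof. by move=> x y z; rewrite -[x]reprK -[y]reprK -[z]reprK !piE mulrA. Qed.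
Lemma mulqC: commutative mul.
Proof. by move=> x y; rewrite -[x]reprK -[y]reprK !piE mulrC. Qed.
Lemma mul1q: left_id one mul.
Proof. by move=> x; rewrite -[x]reprK !piE mul1r. Qed.
Lemma mulq_addl: left_distributive mul +%R.
Proof.
move=> x y z; rewrite -[x]reprK -[y]reprK -[z]reprK.
by apply/eqP; rewrite piE /= mulrDl equiv_refl.
Qed.

HB.instance Definition _ := GRing.Zmodule_isComPzRing.Build quot
  mulqA mulqC mul1q mulq_addl.

Definition pi (x : S) : quot := \pi_quot x.

Lemma pi_zmod : zmod_morphism pi.
Proof. by move=> x y; rewrite /pi !piE. Qed.
HB.instance Definition _ := GRing.isZmodMorphism.Build S quot pi pi_zmod.
Lemma pi_monoid : monoid_morphism pi.
Proof. by split; do ?move=> x y /=; rewrite /pi !piE. Qed.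
HB.instance Definition _ := GRing.isMonoidMorphism.Build S quot pi pi_monoid.

Lemma pi_eq0 x : pi x = 0 <-> I x.
Proof.
have -> : (0 : quot) = pi 0 by rewrite rmorph0.
by split=> [/eqP/eqmodP|Ix]; [rewrite subr0 | apply/eqP/eqmodP; rewrite subr0].
Qed.

Lemma pi_surj (y : quot) : exists x, pi x = y.
Proof. by exists (repr y); rewrite /pi reprK. Qed.

End Quot.
End RQ.

Import RQ.

Section Zorn.
Variables (S : comPzRingType) (J : set S) (a : S).
Hypothesis (hJ : ideal J) (hJa : forall n, ~ J (a ^+ n)).

Definition goodI (M : set S) := [/\ ideal M, J `<=` M & forall n, ~ M (a ^+ n)].

Lemma zorn_ideal : exists M, goodI M /\ forall B, goodI B -> M `<=` B -> B = M.
Proof.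
pose P (A : set S) := A = set0 \/ goodI A.
have [A [PA Amax]] : exists A, P A /\ forall B, A `<` B -> ~ P B.
  apply: Zorn_bigcup => F FP Ftot.
  have [Fne|F0] := pselect (exists A, F A /\ A !=set0); last first.
    left; apply/seteqP; split => // x [A FA Ax]; apply: F0; exists A; split => //; by exists x.
  right; have [A0 [FA0 [x0 A0x0]]] := Fne.
  have gA : forall A, F A -> A !=set0 -> goodI A.
    by move=> A FA [x Ax]; case: (FP A FA) => // eA; rewrite eA in Ax.
  have gA0 := gA _ FA0 (ex_intro _ x0 A0x0).
  have sub2 : forall A B x y, F A -> F B -> A x -> B y ->
     exists C, [/\ F C, goodI C, C x & C y].
    move=> A B x y FA FB Ax By; have [AB|BA] := Ftot A B FA FB.
    + exists B; split => //; [apply: gA => //; by exists y | exact: AB].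
    + exists A; split => //; [apply: gA => //; by exists x | exact: BA].
  split; [split|move=> x Jx|move=> n [C FC Cn]].
  - exists A0 => //; by case: gA0 => -[].
  - move=> x y [A FA Ax] [B FB By]; have [C [FC [[_ hD _] _ _] Cx Cy]] := sub2 _ _ _ _ FA FB Ax By.
    by exists C => //; apply: hD.
  - move=> x y [A FA Ay]; have [C [FC [[_ _ hM] _ _] Cy _]] := sub2 _ _ _ _ FA FA Ay Ay.
    by exists C => //; apply: hM.
  - by exists A0 => //; case: gA0 => _ + _; apply.
  - have [] := gA C FC; first by exists (a ^+ n).
    by move=> _ _ /(_ n).
have gJ : goodI J by split.
have gA : goodI A.
  case: PA => // A0; exfalso; apply: (Amax J) => //; last by right.
  rewrite A0; split; first by [].
  by move=> H; have [J0 _ _] := hJ; exact: H _ J0.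
exists A; split => // B gB AB; apply/seteqP; split => //.
apply: contrapT => nBA; apply: (Amax B); last by right.
by split.
Qed.

End Zorn.


Definition addgen (S : comPzRingType) (M : set S) (x : S) : set S :=
  [set z | exists m r, M m /\ z = m + r * x].

Lemma addgen_ideal (S : comPzRingType) (M : set S) x : ideal M -> ideal (addgen M x).
Proof.
case=> M0 MD MM; split.
- by exists 0, 0; split => //; ring.
- move=> _ _ [m1 [r1 [Mm1 ->]]] [m2 [r2 [Mm2 ->]]]; exists (m1 + m2), (r1 + r2).
  by split; [exact: MD | ring].
- move=> b _ [m1 [r1 [Mm1 ->]]]; exists (b * m1), (b * r1).
  by split; [exact: MM | ring].
Qed.

Lemma addgen_sub (S : comPzRingType) (M : set S) x : M `<=` addgen M x.
Proof. by move=> m Mm; exists m, 0; split => //; ring. Qed.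

Lemma addgen_x (S : comPzRingType) (M : set S) x : ideal M -> addgen M x x.
Proof. by case=> M0 _ _; exists 0, 1; split => //; ring. Qed.

Lemma good_max_prime (S : comPzRingType) (J : set S) (a : S) (M : set S) :
  goodI J a M -> (forall B, goodI J a B -> M `<=` B -> B = M) -> prime_ideal M.
Proof.
move=> gM Mmax; move: (gM); rewrite /goodI => -[[M0 MD MM] JM Ma]; split => //.
  by move=> M1; apply: (Ma 0); rewrite expr0.
move=> x y Mxy; apply: contrapT => /not_orP [nx ny].
have bad : forall z, ~ M z -> exists n m r, M m /\ a ^+ n = m + r * z.
  move=> z nz; apply: contrapT => H.
  have gz : goodI J a (addgen M z).
    split; [exact: addgen_ideal | by move=> u /JM; exact: addgen_sub |].
    move=> n [m [r [Mm e]]]; apply: H; by exists n, m, r.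
  have := Mmax _ gz (@addgen_sub _ M z) => e.
  by apply: nz; rewrite -e; apply: addgen_x.
have [n [m1 [r1 [Mm1 e1]]]] := bad x nx.
have [k [m2 [r2 [Mm2 e2]]]] := bad y ny.
apply: (Ma (n + k)%N); rewrite exprD e1 e2.
have -> : (m1 + r1 * x) * (m2 + r2 * y) =
   m1 * (m2 + r2 * y) + (r1 * x) * m2 + (r1 * r2) * (x * y) by ring.
apply: (MD); [apply: (MD)|]; last by apply: (MM).
  by rewrite mulrC; apply: (MM).
by apply: (MM).
Qed.

Definition mkpt (S : comPzRingType) (P : set S) (hP : prime_ideal P) : Spec S :=
  exist _ P hP.

Lemma spec_eq (S : comPzRingType) (p q : Spec S) : sval p = sval q -> p = q.
Proof.
case: p q => [P hP] [Q hQ] /= e; move: hP hQ; rewrite e => hP hQ.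
by rewrite (Prop_irrelevance hP hQ).
Qed.

Lemma exists_prime (S : comPzRingType) (J : set S) (a : S) :
  ideal J -> (forall n, ~ J (a ^+ n)) -> exists p : Spec S, J `<=` sval p /\ ~ sval p a.
Proof.
move=> hJ hJa; have [M [gM Mmax]] := zorn_ideal hJ hJa.
have pM := good_max_prime gM Mmax.
exists (mkpt pM) => /=; case: gM => _ JM Ma; split => //.
by move=> Ma1; apply: (Ma 1%N); rewrite expr1.
Qed.

Lemma prime_sub_closed (S : comPzRingType) (p : Spec S) :
  exists m : Spec S, sval p `<=` sval m /\ closed_point m.
Proof.
have hJ := prime_ideal_ideal (svalP p).
have hJa : forall n, ~ sval p (1 ^+ n) by move=> n; rewrite expr1n; case: (svalP p).
have [M [gM Mmax]] := zorn_ideal hJ hJa.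
have pM := good_max_prime gM Mmax.
exists (mkpt pM); case: gM => _ JM Ma; split => //.
move=> q /= nqM.
have : ~ (sval (mkpt pM) `<=` sval q).
  move=> Mq; apply: nqM.
  have e : sval q = M.
    apply: Mmax; last exact: Mq.
    split; [exact: prime_ideal_ideal (svalP q) | by move=> u /JM /Mq |].
    by move=> n; rewrite expr1n; case: (svalP q).
  by apply: spec_eq.
move=> /nonsubset [b [Mb nqb]]; exists b; split => // q' nq'b /= e.
by apply: nq'b; rewrite e.
Qed.


Section PrimeFacts.
Variables (S : comPzRingType) (p : Spec S).
Local Notation P := (sval p).
Lemma sp0 : P 0. Proof. by case: (svalP p). Qed.
Lemma spD x y : P x -> P y -> P (x + y). Proof. by case: (svalP p) => _ h _ _ _; apply: h. Qed.
Lemma spM r x : P x -> P (r * x). Proof. by case: (svalP p) => _ _ h _ _; apply: h. Qed.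
Lemma spMr r x : P x -> P (x * r). Proof. by rewrite mulrC; apply: spM. Qed.
Lemma sp1 : ~ P 1. Proof. by case: (svalP p). Qed.
Lemma spP x y : P (x * y) -> P x \/ P y. Proof. by case: (svalP p) => _ _ _ _ h; apply: h. Qed.
Lemma spN x : P x -> P (- x). Proof. by move=> Px; rewrite -mulN1r; apply: spM. Qed.
Lemma spB x y : P x -> P y -> P (x - y). Proof. by move=> Px Py; apply: spD => //; apply: spN. Qed.
Lemma spX x n : P x -> P (x ^+ n.+1). Proof. by move=> Px; rewrite exprS mulrC; apply: spM. Qed.
Lemma sp_compl x : P x -> P (1 - x) -> False.
Proof. by move=> Px P1x; apply: sp1; have := spD Px P1x; rewrite addrC subrK. Qed.
Lemma sp_idem e : e * e = e -> P e \/ P (1 - e).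
Proof. by move=> ee; apply: spP; rewrite mulrBr mulr1 ee subrr; exact: sp0. Qed.
End PrimeFacts.

Lemma set0I (T : Type) (A : set T) : (forall x, ~ A x) -> A = set0.
Proof. by move=> h; apply/seteqP; split => x // /h. Qed.
Lemma set0E (T : Type) (A : set T) x : A = set0 -> A x -> False.
Proof. by move=> ->. Qed.

Lemma ZopenD (S : comPzRingType) (a : S) : Zopen [set p : Spec S | ~ sval p a].
Proof. by move=> p pa; exists a. Qed.

Lemma ZopenT (S : comPzRingType) : Zopen (@setT (Spec S)).
Proof. by move=> p _; exists 1; split => //; apply: sp1. Qed.

Lemma Zopen0 (S : comPzRingType) : Zopen (@set0 (Spec S)).
Proof. by move=> p. Qed.

Lemma Zcont_cst (S : comPzRingType) (X : topologicalType) (x : X) :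
  Zcontinuous (fun _ : Spec S => x).
Proof.
move=> A _; have [Ax|nAx] := pselect (A x).
  have -> : (fun _ : Spec S => x) @^-1` A = setT.
    by apply/seteqP; split => y _ //=.
  exact: ZopenT.
have -> : (fun _ : Spec S => x) @^-1` A = set0.
  by apply/seteqP; split => y //=.
exact: Zopen0.
Qed.

Section Conn.
Variable (R : comPzRingType).

Lemma Zconnected1 (p : Spec R) : Zconnected [set p].
Proof.
move=> U V _ _ cov disj; have [Up|Vp] := cov p erefl.
  right; apply: set0I => q [/= -> Vq]; apply: (set0E disj (x := p)); split => //.
left; apply: set0I => q [/= -> Uq]; apply: (set0E disj (x := p)); split => //.
Qed.

Lemma ZconnectedU (A B : set (Spec R)) z : Zconnected A -> Zconnected B -> A z -> B z ->
  Zconnected (A `|` B).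
Proof.
move=> cA cB Az Bz U V oU oV cov disj.
have hA := cA U V oU oV (fun x Ax => cov x (or_introl Ax))
  (set0I (fun x '(conj (conj Ax Ux) Vx) => set0E disj (conj (conj (or_introl Ax) Ux) Vx))).
have hB := cB U V oU oV (fun x Bx => cov x (or_intror Bx))
  (set0I (fun x '(conj (conj Bx Ux) Vx) => set0E disj (conj (conj (or_intror Bx) Ux) Vx))).
have [Uz|Vz] := cov z (or_introl Az).
- right; apply: set0I => x [[Ax|Bx] Vx].
  + case: hA => h; first by apply: (set0E h (x := z)).
    by apply: (set0E h (x := x)).
  + case: hB => h; first by apply: (set0E h (x := z)).
    by apply: (set0E h (x := x)).
- left; apply: set0I => x [[Ax|Bx] Ux].
  + case: hA => h; last by apply: (set0E h (x := z)).
    by apply: (set0E h (x := x)).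
  + case: hB => h; last by apply: (set0E h (x := z)).
    by apply: (set0E h (x := x)).
Qed.

Lemma Zcomp_refl (p : Spec R) : Zcomponent p p.
Proof. by exists [set p]; split; [exact: Zconnected1|]. Qed.

Lemma Zcomp_sym (p q : Spec R) : Zcomponent p q -> Zcomponent q p.
Proof. by case=> C [cC [Cp Cq]]; exists C. Qed.

Lemma Zcomp_trans (p q r : Spec R) : Zcomponent p q -> Zcomponent q r -> Zcomponent p r.
Proof.
case=> C [cC [Cp Cq]] [D [cD [Dq Dr]]]; exists (C `|` D); split.
  exact: (ZconnectedU (z := q)).
by split; [left|right].
Qed.

Lemma pi0_of_eq (p q : Spec R) : Zcomponent p q -> pi0_of p = pi0_of q.
Proof.
move=> pq; apply: eq_exist; apply/seteqP; split => r.
  by move=> pr; apply: Zcomp_trans (Zcomp_sym pq) pr.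
by move=> qr; apply: Zcomp_trans pq qr.
Qed.

Lemma pi0_ofE (c : pi0 R) (p : Spec R) : sval c p -> pi0_of p = c.
Proof.
case: c => C [p0 e] /= Cp; subst C; rewrite -(pi0_of_eq Cp).
by apply: eq_exist.
Qed.

Lemma pi0_of_mem (p : Spec R) : sval (pi0_of p) p.
Proof. exact: Zcomp_refl. Qed.

Lemma Vconnected (p : Spec R) : Zconnected [set q | sval p `<=` sval q].
Proof.
move=> U V oU oV cov disj.
have key : forall U V : set (Spec R), Zopen V -> U p ->
  (([set q | sval p `<=` sval q] `&` U) `&` V) = set0 ->
  [set q | sval p `<=` sval q] `&` V = set0.
  move=> U' V' oV' Up disj'; apply: set0I => q [pq Vq].
  have [a [qa Da]] := oV' q Vq.
  have Vp : V' p by apply: Da => pa; apply: qa; apply: pq.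
  by apply: (set0E disj' (x := p)); split; [split; [move=> ? ?|]|] => //.
have [Up|Vp] := cov p (fun x px => px).
  by right; apply: (key U V).
left; apply: (key V U) => //.
by rewrite setIAC.
Qed.

Lemma pi0_of_sub (p q : Spec R) : sval p `<=` sval q -> pi0_of q = pi0_of p.
Proof.
move=> pq; apply: esym; apply: pi0_of_eq.
by exists [set r | sval p `<=` sval r]; split; [exact: Vconnected|split => // x px].
Qed.

Lemma idem_comp (p q : Spec R) (e : R) : e * e = e -> Zcomponent p q ->
  ~ sval p e -> ~ sval q e.
Proof.
move=> ee [C [cC [Cp Cq]]] pe qe.
have := cC [set r | ~ sval r e] [set r | ~ sval r (1 - e)] (@ZopenD _ e) (@ZopenD _ (1 - e)).
case.
- move=> r _; have [re|r1e] := sp_idem r ee; [by right => h; apply: (sp_compl re)|by left => h; apply: (sp_compl h)].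
- apply: set0I => r [[_ re] r1e]; by have [|] := sp_idem r ee.
- by move=> h; apply: (set0E h (x := p)).
- by move=> h; apply: (set0E h (x := q)) => //; split => // h'; apply: (sp_compl qe h').
Qed.

End Conn.


Lemma pow_comax (S : comPzRingType) (x y s t : S) : s * x + t * y = 1 ->
  forall n, exists s' t', s' * x ^+ n + t' * y = 1.
Proof.
move=> e; elim=> [|n [s' [t' e']]]; first by exists 1, 0; rewrite expr0; ring.
exists (s' * s), (s' * x ^+ n * t + t').
have -> : s' * s * x ^+ n.+1 + (s' * x ^+ n * t + t') * y =
  s' * x ^+ n * (s * x + t * y) + t' * y by rewrite exprS; ring.
by rewrite e mulr1.
Qed.

Lemma idemC (S : comPzRingType) (u : S) : u * u = u -> (1 - u) * (1 - u) = 1 - u.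
Proof.
move=> uu; have -> : (1 - u) * (1 - u) = 1 - u + (u * u - u) by ring.
by rewrite uu subrr addr0.
Qed.

Lemma idemM (S : comPzRingType) (u v : S) : u * u = u -> v * v = v -> (u * v) * (u * v) = u * v.
Proof.
move=> uu vv; have -> : (u * v) * (u * v) = (u * u) * (v * v) by ring.
by rewrite uu vv.
Qed.

Section Sep.
Variables (R : comPzRingType) (p q : Spec R).
Hypothesis same : forall e : R, e * e = e -> (sval p e <-> sval q e).

Definition Iid : set R := [set x | exists u, [/\ u * u = u, sval p u & x * u = x]].

Lemma Iid_ideal : ideal Iid.
Proof.
split.
- by exists 0; split; [rewrite mulr0|exact: sp0|rewrite mulr0].
- move=> a b [u [uu pu au]] [v [vv pv bv]].
  exists (u + v - u * v); split.
  + have -> : u + v - u * v = 1 - (1 - u) * (1 - v) by ring.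
    by apply: idemC; apply: idemM; apply: idemC.
  + by apply: spB; [apply: spD|apply: spMr].
  + have -> : (a + b) * (u + v - u * v) =
       a * u + a * v - (a * u) * v + b * v + b * u - (b * v) * u by ring.
    by rewrite au bv; ring.
- move=> a b [u [uu pu bu]]; exists u; split => //; by rewrite -mulrA bu.
Qed.

Lemma Iid_p : Iid `<=` sval p.
Proof. by move=> x [u [_ pu <-]]; apply: spM. Qed.

Lemma Iid_q : Iid `<=` sval q.
Proof. by move=> x [u [uu pu <-]]; apply: spM; apply/same. Qed.

Lemma Iid_idem u : u * u = u -> sval p u -> Iid u.
Proof. by move=> uu pu; exists u. Qed.

Definition VI := [set r : Spec R | Iid `<=` sval r].

Lemma VI_conn : Zconnected VI.
Proof.
move=> U V oU oV cov disj.
apply: contrapT => /not_orP [nU nV].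
have [q1 [V1 U1]] : exists q1, VI q1 /\ U q1.
  apply: contrapT => H; apply: nU; apply: set0I => r [a b]; apply: H; by exists r.
have [q2 [V2 W2]] : exists q2, VI q2 /\ V q2.
  apply: contrapT => H; apply: nV; apply: set0I => r [a b]; apply: H; by exists r.
pose J1 := [set z | forall r, VI r -> U r -> sval r z].
pose J2 := [set z | forall r, VI r -> V r -> sval r z].
have J1i : ideal J1.
  split; [by move=> r _ _; exact: sp0 | by move=> a b ha hb r Vr Ur; apply: spD; [apply: ha|apply: hb] |].
  by move=> a b hb r Vr Ur; apply: spM; apply: hb.
have J2i : ideal J2.
  split; [by move=> r _ _; exact: sp0 | by move=> a b ha hb r Vr Ur; apply: spD; [apply: ha|apply: hb] |].
  by move=> a b hb r Vr Ur; apply: spM; apply: hb.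
have [a [b [J1a J2b ab1]]] : exists a b, [/\ J1 a, J2 b & a + b = 1].
  apply: contrapT => H.
  pose K := [set z | exists a b, [/\ J1 a, J2 b & z = a + b]].
  have Ki : ideal K.
    split.
    - by exists 0, 0; split; [case: (J1i)|case: (J2i)|rewrite addr0].
    - move=> _ _ [a1 [b1 [h1 h2 ->]]] [a2 [b2 [h3 h4 ->]]].
      exists (a1 + a2), (b1 + b2); split; [by case: (J1i) => _ + _; apply|by case: (J2i) => _ + _; apply|ring].
    - move=> c _ [a1 [b1 [h1 h2 ->]]]; exists (c * a1), (c * b1).
      by split; [by case: (J1i) => _ _; apply|by case: (J2i) => _ _; apply|ring].
  have [r [Kr _]] : exists r : Spec R, K `<=` sval r /\ ~ sval r 1.
    apply: exists_prime => // n; rewrite expr1n => -[a' [b' [h1 h2 e]]].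
    by apply: H; exists a', b'.
  have Ir : VI r.
    move=> x Ix; apply: Kr; exists x, 0; split; last by rewrite addr0.
    - by move=> r' Vr' _; apply: Vr'.
    - by case: (J2i).
  have [Ur|Vr] := cov r Ir.
  - have [c [rc Dc]] := oU r Ur.
    apply: rc; apply: Kr; exists 0, c; split; [by case: (J1i)| |by rewrite add0r].
    move=> r' Vr' Wr'; apply: contrapT => nc.
    by apply: (set0E disj (x := r')); split; [split; [|apply: Dc]|].
  - have [c [rc Dc]] := oV r Vr.
    apply: rc; apply: Kr; exists c, 0; split; [|by case: (J2i)|by rewrite addr0].
    move=> r' Vr' Ur'; apply: contrapT => nc.
    by apply: (set0E disj (x := r')); split; [split|apply: Dc].
have [n Iabn] : exists n, Iid ((a * b) ^+ n).
  apply: contrapT => /forallNP H.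
  have [r [Ir rab]] := exists_prime Iid_ideal H.
  have [Ur|Vr] := cov r Ir.
  - by apply: rab; apply: spMr; apply: J1a.
  - by apply: rab; apply: spM; apply: J2b.
have IabN : Iid ((a * b) ^+ n.+1).
  by rewrite exprS; case: Iid_ideal => _ _; apply.
have [s [t e1]] : exists s t, s * a ^+ n.+1 + t * b = 1.
  by apply: (pow_comax (s := 1) (t := 1)); rewrite !mul1r.
have [t' [s' e2]] : exists t' s', t' * b ^+ n.+1 + s' * (s * a ^+ n.+1) = 1.
  by apply: (pow_comax (s := t) (t := 1)); rewrite mul1r addrC.
set A := s' * (s * a ^+ n.+1) in e2; set B := t' * b ^+ n.+1 in e2.
have J1A : J1 A.
  by rewrite /A exprS; do 2 (case: (J1i) => _ _; apply); rewrite mulrC; case: (J1i) => _ _; apply.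
have J2B : J2 B.
  by rewrite /B exprS; case: (J2i) => _ _; apply; rewrite mulrC; case: (J2i) => _ _; apply.
have IAB : Iid (A * B).
  have -> : A * B = (s' * s * t') * (a * b) ^+ n.+1 by rewrite /A /B exprMn; ring.
  by case: Iid_ideal => _ _; apply.
have [u [uu pu ABu]] := IAB.
pose e := A * (1 - u).
have ee : e * e = e.
  have ww : (1 - u) * (1 - u) = 1 - u.
    have -> : (1 - u) * (1 - u) = 1 - u + (u * u - u) by ring.
    by rewrite uu subrr addr0.
  have AA : A * A = A - A * B.
    have -> : A * A = A * (B + A) - A * B by ring.
    by rewrite e2 mulr1.
  have -> : e * e = (A * A) * ((1 - u) * (1 - u)) by rewrite /e; ring.
  rewrite ww AA.
  have -> : (A - A * B) * (1 - u) = A * (1 - u) - (A * B - (A * B) * u) by ring.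
  by rewrite ABu subrr subr0.
have q1e : sval q1 e by apply: spMr; apply: J1A.
have q2B : sval q2 B by apply: J2B.
have q2A : ~ sval q2 A by move=> h; apply: (@sp1 _ q2); rewrite -e2; apply: spD.
have q2u : sval q2 u by apply: V2; apply: Iid_idem.
have q2e : ~ sval q2 e.
  by move=> /spP [//|h]; apply: (sp_compl q2u h).
have [pe|p1e] := @sp_idem _ p _ ee.
  by apply: q2e; apply: V2; apply: Iid_idem.
by apply: (sp_compl q1e); apply: V1; apply: Iid_idem => //; apply: idemC.
Qed.

Lemma same_idem_comp : Zcomponent p q.
Proof.
exists VI; split; first exact: VI_conn.
by split; [exact: Iid_p | exact: Iid_q].
Qed.
End Sep.


Lemma spec_const (S : comPzRingType) (Y : topologicalType) (F : Spec S -> Y) :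
  hausdorff_space Y -> Zcontinuous F -> forall p q : Spec S, sval p `<=` sval q -> F q = F p.
Proof.
move=> hY cF p q pq; apply: contrapT => /eqP nFqp.
move: hY; rewrite open_hausdorff => /(_ _ _ nFqp) [[W1 W2] /= [W1q W2p] [oW1 oW2 /eqP W12]].
rewrite in_setE in W1q; rewrite in_setE in W2p.
have [a [qa Da]] := cF W1 oW1 q W1q.
have W1p : W1 (F p) by apply: (Da p) => pa; apply: qa; apply: pq.
by apply: (set0E W12 (x := F p)).
Qed.

Section Quotients.
Variables (S : comPzRingType) (J : set S) (hJ : ideal J).
Local Notation Q := (RQ.quot hJ).
Local Notation pi := (RQ.pi hJ).

Lemma pi_rmorph : {rmorphism S -> Q}.
Proof. exact: pi. Defined.

Lemma repr_pi_in (P : Spec S) x : J `<=` sval P -> (sval P (repr (pi x)) <-> sval P x).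
Proof.
move=> JP; have d : sval P (repr (pi x) - x) by apply: JP; exact: RQ.reprP.
split=> h.
  by have := spB h d; rewrite opprB addrC subrK.
by have := spD d h; rewrite subrK.
Qed.

Lemma push_prime (P : Spec S) : J `<=` sval P ->
  prime_ideal [set y : Q | sval P (repr y)].
Proof.
move=> JP.
have rp : forall x, sval P (repr (pi x)) <-> sval P x by move=> x; apply: repr_pi_in.
have E : forall y : Q, y = pi (repr y) by move=> y; rewrite /RQ.pi reprK.
split => /=.
- by rewrite -(rmorph0 pi_rmorph) /=; apply/rp; exact: sp0.
- move=> a b; rewrite (E a) (E b) !rp -rmorphD rp; exact: spD.
- move=> a b; rewrite (E a) (E b) !rp -rmorphM rp; exact: spM.
- by rewrite -(rmorph1 pi_rmorph) /= rp; exact: sp1.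
- by move=> a b; rewrite (E a) (E b) -rmorphM !rp; exact: spP.
Qed.

Definition push (P : Spec S) (JP : J `<=` sval P) : Spec Q := mkpt (push_prime JP).

Lemma push_back (P : Spec S) (JP : J `<=` sval P) : specmap pi_rmorph (push JP) = P.
Proof.
apply: spec_eq => /=; apply/seteqP; split => x /=.
  by move/repr_pi_in => /(_ JP).
by move=> Px; apply/repr_pi_in.
Qed.

Lemma specmap_pi_sup (Qp : Spec Q) : J `<=` sval (specmap pi_rmorph Qp).
Proof.
move=> x Jx /=; have -> : pi x = 0 by apply/RQ.pi_eq0.
exact: sp0.
Qed.

End Quotients.

Section PrimeQuot.
Variables (S : comPzRingType) (P : Spec S).
Local Notation hP := (prime_ideal_ideal (svalP P)).
Local Notation Q := (RQ.quot hP).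
Local Notation pi := (RQ.pi hP).

Lemma zero_prime : prime_ideal [set y : Q | y = 0].
Proof.
have E : forall y : Q, y = pi (repr y) by move=> y; rewrite /RQ.pi reprK.
split => /=.
- by [].
- by move=> a b -> ->; rewrite addr0.
- by move=> a b ->; rewrite mulr0.
- by rewrite -(rmorph1 (pi_rmorph hP)) /= => /RQ.pi_eq0; exact: sp1.
- move=> a b; rewrite (E a) (E b) -rmorphM /= => /RQ.pi_eq0 /spP [h|h].
    by left; apply/RQ.pi_eq0.
  by right; apply/RQ.pi_eq0.
Qed.

Definition zpt : Spec Q := mkpt zero_prime.

Lemma zpt_back : specmap (pi_rmorph hP) zpt = P.
Proof.
apply: spec_eq => /=; apply/seteqP; split => x /=.
  by move/RQ.pi_eq0.
by move=> Px; apply/RQ.pi_eq0.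
Qed.

Lemma zpt_min (q : Spec Q) : sval zpt `<=` sval q.
Proof. by move=> y /= ->; exact: sp0. Qed.

End PrimeQuot.

Section Lift.
Variables (S T : comPzRingType) (f : {rmorphism S -> T}) (I : set S) (J : set T).
Variables (hI : ideal I) (hJ : ideal J) (fIJ : forall x, I x -> J (f x)).

Definition qlift (y : RQ.quot hI) : RQ.quot hJ := RQ.pi hJ (f (repr y)).

Lemma qliftE x : qlift (RQ.pi hI x) = RQ.pi hJ (f x).
Proof.
rewrite /qlift; apply/eqP; rewrite -subr_eq0; apply/eqP.
rewrite -rmorphB -rmorphB; apply/RQ.pi_eq0; apply: fIJ; exact: RQ.reprP.
Qed.

Lemma qlift_zmod : zmod_morphism qlift.
Proof.
move=> a b; have [x <-] := RQ.pi_surj a; have [y <-] := RQ.pi_surj b.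
by rewrite -rmorphB !qliftE rmorphB /= rmorphB.
Qed.
HB.instance Definition _ := GRing.isZmodMorphism.Build _ _ qlift qlift_zmod.
Lemma qlift_monoid : monoid_morphism qlift.
Proof.
split.
  by rewrite -(rmorph1 (pi_rmorph hI)) /= qliftE rmorph1 rmorph1.
move=> a b; have [x <-] := RQ.pi_surj a; have [y <-] := RQ.pi_surj b.
by rewrite -rmorphM !qliftE !rmorphM.
Qed.
HB.instance Definition _ := GRing.isMonoidMorphism.Build _ _ qlift qlift_monoid.

Lemma qlift_rmorph : {rmorphism RQ.quot hI -> RQ.quot hJ}.
Proof. exact: qlift. Defined.

End Lift.


Section WL.
Variables (R : comPzRingType) (hR : wlocal R).

Definition mpt (c : pi0 R) : Spec R :=
  proj1_sig (cid (let: ex_intro p (conj h _) := hR.2 c in ex_intro _ p h)).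

Lemma mptP c : sval c (mpt c) /\ closed_point (mpt c).
Proof. rewrite /mpt; case: cid => p //. Qed.

Lemma mpt_uniq c q : sval c q -> closed_point q -> q = mpt c.
Proof.
move=> cq clq; have [p [hp up]] := hR.2 c.
by rewrite -(up q (conj cq clq)) (up (mpt c) (mptP c)).
Qed.

Lemma spec_to_closed (p : Spec R) : sval p `<=` sval (mpt (pi0_of p)).
Proof.
have [m [pm clm]] := prime_sub_closed p.
have e : pi0_of m = pi0_of p by apply: pi0_of_sub.
have : m = mpt (pi0_of p) by apply: mpt_uniq => //; rewrite -e; exact: pi0_of_mem.
by move=> <-.
Qed.

Definition Rq (P : Spec R) := RQ.quot (prime_ideal_ideal (svalP P)).
Definition piq (P : Spec R) : {rmorphism R -> Rq P} := pi_rmorph _.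

End WL.

Section Main.
Variables (R : comPzRingType) (hR : wlocal R) (X Y : topologicalType)
  (qX : X -> pi0 R) (qY : Y -> pi0 R).
Hypotheses (hX : compactly_generated_hausdorff X) (hY : compactly_generated_hausdorff Y).

Lemma const_relBetti (P : Spec R) (y : X) : qX y = pi0_of P ->
  relBetti qX (piq P) (fun _ => y).
Proof.
move=> e; split; first exact: Zcont_cst.
move=> Q; rewrite e; apply: esym; apply: pi0_of_sub; exact: specmap_pi_sup.
Qed.

Variable eta : forall (S : comPzRingType) (f : {rmorphism R -> S}), (Spec S -> X) -> (Spec S -> Y).
Hypothesis heta : betti_morphism qX qY eta.

Definition g (y : X) : Y :=
  let m := mpt hR (qX y) in eta (piq m) (fun _ => y) (zpt m).

Lemma eta_const (P : Spec R) (y : X) : qX y = pi0_of P ->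
  forall Q, eta (piq P) (fun _ => y) Q = eta (piq P) (fun _ => y) (zpt P).
Proof.
move=> e Q; have [cont _] := heta.1 _ _ _ (const_relBetti e).
by apply: (spec_const hY.1 cont); exact: zpt_min.
Qed.

Lemma pointwise (S : comPzRingType) (f : {rmorphism R -> S}) (phi : Spec S -> X) :
  relBetti qX f phi -> forall P, eta f phi P = g (phi P).
Proof.
move=> rb P; set y := phi P.
pose p' := specmap f P.
have ey : qX y = pi0_of p' by apply: rb.2.
pose hP := prime_ideal_ideal (svalP P).
pose h : {rmorphism S -> RQ.quot hP} := pi_rmorph hP.
have step1 : phi \o specmap h = fun _ => y.
  apply: funext => Q /=; rewrite /y; apply: (spec_const hX.1 rb.1).
  exact: specmap_pi_sup.
have fIJ : forall x, sval p' x -> sval P (f x) by [].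
pose hp' := prime_ideal_ideal (svalP p').
pose k := @qlift_rmorph R S f (sval p') (sval P) hp' hP fIJ.
have nat := heta.2.
have step2 : eta f phi P = eta (h \o f) (fun _ => y) (zpt P).
  rewrite -{1}(zpt_back P) -/hP -/h.
  rewrite -step1.
  have := nat S (RQ.quot hP) f (h \o f) h (fun r => erefl) phi rb.
  by move=> ->.
have step3 : eta (h \o f) (fun _ => y) (zpt P) = eta (piq p') (fun _ => y) (zpt p').
  have := nat (Rq p') (RQ.quot hP) (piq p') (h \o f) k (fun r => qliftE hp' hP fIJ r)
     (fun _ => y) (const_relBetti ey).
  move=> /(congr1 (fun F => F (zpt P))) /= ->.
  exact: (eta_const ey).
rewrite step2 step3 /g ey.
set m := mpt hR (pi0_of p').
have pm : sval p' `<=` sval m by apply: spec_to_closed.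
pose hm := prime_ideal_ideal (svalP m).
pose l := @qlift_rmorph R R idfun (sval p') (sval m) hp' hm pm.
have := nat (Rq p') (Rq m) (piq p') (piq m) l (fun r => @qliftE R R idfun _ _ hp' hm pm r)
     (fun _ => y) (const_relBetti ey).
move=> /(congr1 (fun F => F (zpt m))) /= ->.
by rewrite (eta_const ey (specmap l (zpt m))).
Qed.

Lemma qYg y : qY (g y) = qX y.
Proof.
rewrite /g; set m := mpt hR (qX y).
have em : qX y = pi0_of m by apply: esym; apply: pi0_ofE; exact: (mptP hR _).1.
have [_ h] := heta.1 _ _ _ (const_relBetti em).
by rewrite h zpt_back.
Qed.

End Main.

Lemma faithful (R : comPzRingType) (hR : wlocal R) (X Y : topologicalType)
  (qX : X -> pi0 R) (qY : Y -> pi0 R) (g1 g2 : X -> Y) :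
  (forall (S : comPzRingType) (f : {rmorphism R -> S}) (phi : Spec S -> X),
            relBetti qX f phi -> g1 \o phi = g2 \o phi) -> g1 = g2.
Proof.
move=> H; apply: funext => y.
set m := mpt hR (qX y).
have em : qX y = pi0_of m by apply: esym; apply: pi0_ofE; exact: (mptP hR _).1.
have := H _ _ _ (const_relBetti em).
by move=> /(congr1 (fun F => F (zpt m))).
Qed.


Section Ind.
Variables (I : Type) (R : comPzRingType).

Definition ind (Z : set I) : I -> R := fun i => if `[< Z i >] then 1 else 0.

Lemma indE Z i : ind Z i = if `[< Z i >] then 1 else 0. Proof. by []. Qed.

Lemma ind_in Z i : Z i -> ind Z i = 1.
Proof. by move=> Zi; rewrite indE; case: asboolP. Qed.
Lemma ind_out Z i : ~ Z i -> ind Z i = 0.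
Proof. by move=> Zi; rewrite indE; case: asboolP. Qed.

Lemma indI Z1 Z2 : ind (Z1 `&` Z2) = ind Z1 * ind Z2.
Proof.
apply: funext => i; change (ind (Z1 `&` Z2) i = ind Z1 i * ind Z2 i).
have [h1|h1] := pselect (Z1 i); have [h2|h2] := pselect (Z2 i).
- by rewrite !ind_in ?mulr1 //; split.
- by rewrite (ind_in h1) !ind_out ?mulr0 // => -[].
- by rewrite (ind_in h2) !ind_out ?mul0r // => -[].
- by rewrite !ind_out ?mulr0 // => -[].
Qed.

Lemma indT : ind setT = 1.
Proof. by apply: funext => i; rewrite ind_in. Qed.
Lemma ind0 : ind set0 = 0.
Proof. by apply: funext => i; rewrite ind_out. Qed.
Lemma indC Z : ind Z + ind (~` Z) = 1.
Proof.
apply: funext => i; change (ind Z i + ind (~` Z) i = 1).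
have [h|h] := pselect (Z i).
- by rewrite ind_in // ind_out ?addr0 // => /(_ h).
- by rewrite ind_out // ind_in ?add0r.
Qed.
Lemma indS Z Z' : Z `<=` Z' -> ind Z = ind Z * ind Z'.
Proof.
move=> ZZ'; rewrite -indI; congr ind; apply/seteqP; split => x.
  by move=> h; split => //; exact: ZZ'.
by case.
Qed.

Variable (P : Spec (I -> R)).
Definition UF : set_system I := [set Z | ~ sval P (ind Z)].

Lemma UF_filter : Filter UF.
Proof.
split.
- by rewrite /UF /= indT; exact: sp1.
- by move=> A B hA hB; rewrite /UF /= indI => /spP [].
- by move=> A B AB hA hB; apply: hA; rewrite (indS AB); apply: spM.
Qed.

Lemma UF_proper : ProperFilter UF.
Proof.
apply: Build_ProperFilter; last exact: UF_filter.
by rewrite /UF /= ind0 => h; apply: h; exact: sp0.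
Qed.

Lemma UF_ultra Z : UF Z \/ UF (~` Z).
Proof.
apply: contrapT => /not_orP [h1 h2]; apply: (@sp1 _ P).
rewrite -(indC Z); apply: spD; exact: contrapT.
Qed.

End Ind.


Section Top.
Variables (X : topologicalType) (hX : hausdorff_space X).

Lemma lim_uniq (F : set_system X) (y z : X) : ProperFilter F ->
  nbhs y `<=` F -> nbhs z `<=` F -> y = z.
Proof.
move=> PF yF zF; apply: hX => A B Ay Bz.
apply: (@filter_ex _ F PF); apply: filterI; [exact: yF|exact: zF].
Qed.

Lemma ultra_lim (U : set_system X) (K : set X) : ProperFilter U ->
  (forall Z, U Z \/ U (~` Z)) -> compact K -> U K -> exists y, K y /\ nbhs y `<=` U.
Proof.
move=> PU uU cK UK; have [y [Ky cly]] := cK U PU UK.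
exists y; split => // N Ny; case: (uU N) => // UN.
by have [w [nw Nw]] := cly _ _ UN Ny.
Qed.

Lemma reg_in (K : set X) (O : set X) (y : X) : compact K -> open O -> K y -> O y ->
  exists V, nbhs y V /\ forall z, K z -> closure V z -> O z.
Proof.
move=> cK oO Ky Oy; apply: contrapT => /forallNP H.
have H' : forall V, nbhs y V -> exists z, [/\ K z, closure V z & ~ O z].
  move=> V nV; have /not_andP [//|] := H V.
  move=> /existsNP [z /not_implyP [Kz /not_implyP [cz nOz]]]; by exists z.
pose C := K `&` ~` O.
have cC : compact C by apply: compact_closedI => //; exact: open_closedC.
pose G := [set W | exists V, nbhs y V /\ C `&` closure V `<=` W].
have PG : ProperFilter G.
  apply: Build_ProperFilter.
    move=> [V [nV sV]]; have [z [Kz cz nOz]] := H' V nV.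
    by apply: (sV z).
  split.
  - by exists setT; split => //; exact: filterT.
  - move=> A B [V1 [n1 s1]] [V2 [n2 s2]]; exists (V1 `&` V2); split.
      exact: filterI.
    move=> w [Cw cw]; split; [apply: s1|apply: s2]; split => //.
      by apply: (closureS (@subIsetl _ V1 V2)).
    by apply: (closureS (@subIsetr _ V1 V2)).
  - by move=> A B AB [V [nV sV]]; exists V; split => // w /sV; exact: AB.
have GC : G C by exists setT; split; [exact: filterT| by move=> w []].
have [z [Cz clz]] := cC G PG GC.
have yz : y = z.
  apply: hX => A B nA nB.
  move: nB; rewrite nbhsE => -[B' [oB' B'z] B'B].
  have GA : G (C `&` closure A) by exists A; split.
  have [w [[_ cw] B'w]] := clz _ _ GA (open_nbhs_nbhs (conj oB' B'z)).
  have [v [Av B'v]] := cw B' (open_nbhs_nbhs (conj oB' B'w)).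
  by exists v; split => //; exact: B'B.
by case: Cz => _; rewrite -yz.
Qed.

End Top.


Section Cst.
Variables (I : Type) (R : comPzRingType).
Definition cstf (r : R) : I -> R := fun _ => r.
Lemma cstf_zmod : zmod_morphism cstf. Proof. by []. Qed.
HB.instance Definition _ := GRing.isZmodMorphism.Build R (I -> R) cstf cstf_zmod.
Lemma cstf_monoid : monoid_morphism cstf. Proof. by []. Qed.
HB.instance Definition _ := GRing.isMonoidMorphism.Build R (I -> R) cstf cstf_monoid.
Definition cstm : {rmorphism R -> (I -> R)} := cstf.
End Cst.

Lemma idem_comp_iff (R : comPzRingType) (p q : Spec R) (e : R) : e * e = e ->
  Zcomponent p q -> (sval p e <-> sval q e).
Proof.
move=> ee pq; split => h; apply: contrapT => nh.
  by apply: (idem_comp ee (Zcomp_sym pq) nh).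
by apply: (idem_comp ee pq nh).
Qed.

Section Cont.
Variables (R : comPzRingType) (hR : wlocal R) (X : topologicalType)
  (qX : X -> pi0 R).
Hypotheses (hX : compactly_generated_hausdorff X) (cqX : pi0_continuous qX).
Variables (K : set X) (cK : compact K).

Definition pp (i : X) : Spec R := mpt hR (qX i).

Definition Jset : set (X -> R) := [set s | forall i, K i -> sval (pp i) (s i)].

Lemma hJ : ideal Jset.
Proof.
split.
- by move=> i _; exact: sp0.
- by move=> a b ha hb i Ki; apply: spD; [apply: ha|apply: hb].
- by move=> a b hb i Ki; apply: spM; apply: hb.
Qed.

Definition SS := RQ.quot hJ.
Definition piS : {rmorphism (X -> R) -> SS} := pi_rmorph hJ.
Definition fS : {rmorphism R -> SS} := piS \o cstm X R.
Definition tl (Q : Spec SS) : Spec (X -> R) := specmap piS Q.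

Lemma J_tl Q : Jset `<=` sval (tl Q).
Proof. exact: specmap_pi_sup. Qed.

Lemma UF_K Q : UF (tl Q) K.
Proof.
case: (UF_ultra (tl Q) K) => // h; exfalso; apply: h; apply: J_tl => i Ki.
by rewrite ind_out; [exact: sp0|].
Qed.

Lemma limQ Q : exists y, K y /\ nbhs y `<=` UF (tl Q).
Proof.
apply: ultra_lim => //; [exact: UF_proper|exact: UF_ultra|exact: UF_K].
Qed.

Definition phiS (Q : Spec SS) : X := proj1_sig (cid (limQ Q)).
Lemma phiS_K Q : K (phiS Q). Proof. by rewrite /phiS; case: cid => y []. Qed.
Lemma phiS_nbhs Q : nbhs (phiS Q) `<=` UF (tl Q). Proof. by rewrite /phiS; case: cid => y []. Qed.

Lemma phiS_cont : Zcontinuous phiS.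
Proof.
move=> O oO Q OQ.
have [V [nV hV]] := reg_in hX.1 cK oO (phiS_K Q) OQ.
exists (piS (ind R V)); split; first exact: phiS_nbhs.
move=> Q' nQ'; apply: hV; first exact: phiS_K.
move=> B nB; have UV : UF (tl Q') V by [].
have UB := phiS_nbhs nB.
have PU := UF_proper (tl Q').
apply: (@filter_ex _ _ PU); exact: (@filterI _ _ (@filter_filter _ _ PU)).
Qed.

Lemma pi0_open_D (e : R) : e * e = e -> pi0_open [set c : pi0 R | ~ sval (mpt hR c) e].
Proof.
move=> ee; rewrite /pi0_open.
have -> : @pi0_of R @^-1` [set c : pi0 R | ~ sval (mpt hR c) e] = [set p | ~ sval p e].
  apply/seteqP; split => p /= h; apply: contra_not h => h.
    apply/(idem_comp_iff ee (mptP hR (pi0_of p)).1); exact: h.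
  by apply/(idem_comp_iff ee (mptP hR (pi0_of p)).1).
exact: ZopenD.
Qed.

Lemma core (Q : Spec SS) (e : R) : e * e = e -> ~ sval (pp (phiS Q)) e ->
  sval (specmap fS Q) (1 - e).
Proof.
move=> ee ne.
set N := qX @^-1` [set c : pi0 R | ~ sval (mpt hR c) e].
have oN : open N by apply: cqX; exact: pi0_open_D.
have UN : UF (tl Q) N.
  by apply: phiS_nbhs; apply: open_nbhs_nbhs; split.
have Js : Jset (@cstf X R (1 - e) * ind R N).
  move=> i Ki; change (sval (pp i) ((1 - e) * ind R N i)).
  have [Ni|Ni] := pselect (N i).
    rewrite ind_in // mulr1; have [h|h] := sp_idem (pp i) ee => //.
  by rewrite ind_out // mulr0; exact: sp0.
have := @J_tl Q _ Js => /spP [h|h]; last by exfalso; apply: UN.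
exact: h.
Qed.

Lemma phiS_over Q : qX (phiS Q) = pi0_of (specmap fS Q).
Proof.
set m := pp (phiS Q).
have em : qX (phiS Q) = pi0_of m.
  by apply: esym; apply: pi0_ofE; exact: (mptP hR _).1.
rewrite em; apply: pi0_of_eq; apply: same_idem_comp => e ee; split => h.
  have ne' : ~ sval m (1 - e) by move=> h'; exact: (sp_compl h h').
  by have := core (idemC ee) ne'; rewrite opprB addrC subrK.
apply: contrapT => ne; have := core ee ne => h'; exact: (sp_compl h h').
Qed.

Lemma phiS_rb : relBetti qX fS phiS.
Proof. by split; [exact: phiS_cont|exact: phiS_over]. Qed.

Definition Qt (U : set_system X) : set (X -> R) := [set s | U [set i | sval (pp i) (s i)]].

Lemma Qt_prime (U : set_system X) : ProperFilter U -> (forall Z, U Z \/ U (~` Z)) ->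
  prime_ideal (Qt U).
Proof.
move=> PU uU; have FU := @filter_filter _ _ PU.
split.
- by apply: filterS (@filterT _ _ FU) => i _; exact: sp0.
- move=> a b ha hb; apply: filterS (filterI ha hb) => i [h1 h2]; exact: spD.
- move=> a b hb; apply: filterS hb => i h; exact: spM.
- move=> h; have [i hi] := @filter_ex _ _ PU _ h; exact: sp1 hi.
- move=> a b hab; case: (uU [set i | sval (pp i) (a i)]) => h; first by left.
  right; apply: filterS (filterI hab h) => i [h1 h2].
  by case: (spP h1).
Qed.

Lemma J_Qt (U : set_system X) : Filter U -> U K -> Jset `<=` Qt U.
Proof. by move=> FU UK s Js; apply: filterS UK => i Ki; exact: Js. Qed.

Section Pt.
Variables (U : set_system X) (PU : ProperFilter U) (uU : forall Z, U Z \/ U (~` Z)) (UK : U K).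

Definition QtP : Spec (X -> R) := mkpt (Qt_prime PU uU).
Definition QU : Spec SS := @push _ Jset hJ QtP (J_Qt (@filter_filter _ _ PU) UK).

Lemma QU_mem a : sval QU a <-> Qt U (repr a).
Proof. by []. Qed.

Lemma phiS_QU x : nbhs x `<=` U -> phiS QU = x.
Proof.
move=> xU.
have UUF : U `<=` UF (tl QU).
  rewrite /tl push_back => Z UZ /= h.
  have [i [Zi hi]] := @filter_ex _ _ PU _ (filterI UZ h).
  by move: hi; rewrite /= ind_in //; exact: sp1.
apply: (lim_uniq hX.1 (UF_proper (tl QU))).
  exact: phiS_nbhs.
by move=> B /xU; exact: UUF.
Qed.

End Pt.

Variables (Y : topologicalType) (qY : Y -> pi0 R) (hY : compactly_generated_hausdorff Y).
Variable eta : forall (S : comPzRingType) (f : {rmorphism R -> S}), (Spec S -> X) -> (Spec S -> Y).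
Hypothesis heta : betti_morphism qX qY eta.

Lemma key (A : set X) (x : X) (O : set Y) : open O -> K x -> closure (A `&` K) x ->
  (forall i, A i -> K i -> ~ O (g hR qX eta i)) -> ~ O (g hR qX eta x).
Proof.
move=> oO Kx clx hA Ogx.
have PF : ProperFilter (within (A `&` K) (nbhs x)).
  exact: (@within_nbhs_proper _ (A `&` K) x clx).
have [U [ufU FU]] := ultraFilterLemma PF.
have PU : ProperFilter U := @ultra_proper _ _ ufU.
have uU : forall Z, U Z \/ U (~` Z) by move=> Z; exact: in_ultra_setVsetC.
have UAK : U (A `&` K) by apply: FU; exact: withinT.
have UK : U K by apply: filterS UAK => i [].
have xU : nbhs x `<=` U.
  move=> B nB; apply: FU; rewrite /within /=; apply: filterS nB => i Bi _; exact: Bi.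
set G := eta fS phiS.
have [cG _] := heta.1 _ _ _ phiS_rb.
have GE : forall Q, G Q = g hR qX eta (phiS Q) := pointwise hR hX hY heta phiS_rb.
set QU0 := QU PU uU UK.
have GQ : O (G QU0) by rewrite GE (@phiS_QU U PU uU UK x xU).
have [a [na Da]] := cG O oO QU0 GQ.
have nQt : ~ Qt U (repr a) by move=> h; apply: na.
have UC : U (~` [set i | sval (pp i) (repr a i)]) by case: (uU [set i | sval (pp i) (repr a i)]).
have [i [[Ai Ki] ni]] := @filter_ex _ _ PU _ (filterI UAK UC).
pose Ui := principal_filter i.
have ufi : UltraFilter Ui := principal_filter_ultra i.
have PUi : ProperFilter Ui := @ultra_proper _ _ ufi.
have uUi : forall Z, Ui Z \/ Ui (~` Z) by move=> Z; exact: in_ultra_setVsetC.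
have UiK : Ui K by apply/principal_filterP.
set Qi := QU PUi uUi UiK.
have nQi : ~ sval Qi a.
  move=> h; apply: ni; move: h => /QU_mem /principal_filterP; exact.
have ei : phiS Qi = i.
  apply: (@phiS_QU Ui PUi uUi UiK i).
  by move=> B /nbhs_singleton Bi; apply/principal_filterP.
have := Da Qi nQi; rewrite /preimage /= -/G GE ei; exact: hA.
Qed.

End Cont.


Lemma g_cont (R : comPzRingType) (hR : wlocal R) (X Y : topologicalType)
  (qX : X -> pi0 R) (qY : Y -> pi0 R)
  (hX : compactly_generated_hausdorff X) (hY : compactly_generated_hausdorff Y)
  (cqX : pi0_continuous qX) eta (heta : betti_morphism qX qY eta) :
  continuous (g hR qX eta).
Proof.
apply/continuousP => O oO.
rewrite -[_ @^-1` O]setCK; apply: closed_openC.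
apply: hX.2 => K cK.
have cKc : closed K := compact_closed hX.1 cK.
apply/closure_id; apply/seteqP; split; first exact: subset_closure.
move=> x clx.
have Kx : K x.
  have := closureS (@subIsetr _ (~` (g hR qX eta @^-1` O)) K) clx.
  by rewrite -(closure_id K).1.
split => //.
exact: (key hX cqX cK hY heta oO Kx clx (fun i Ai _ => Ai)).
Qed.

Theorem proposition4p10 (R : comPzRingType) (hR : wlocal R) :
  forall (X Y : topologicalType) (qX : X -> pi0 R) (qY : Y -> pi0 R),
    compactly_generated_hausdorff X -> compactly_generated_hausdorff Y ->
    pi0_continuous qX -> pi0_continuous qY ->
    (* faithful *)
    (forall g1 g2 : X -> Y,
        continuous g1 -> continuous g2 -> qY \o g1 = qX -> qY \o g2 = qX ->
        (forall (S : comPzRingType) (f : {rmorphism R -> S}) (phi : Spec S -> X),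
            relBetti qX f phi -> g1 \o phi = g2 \o phi) ->
        g1 = g2) /\
    (* full *)
    (forall eta, betti_morphism qX qY eta ->
       exists g : X -> Y,
         [/\ continuous g, qY \o g = qX &
             forall (S : comPzRingType) (f : {rmorphism R -> S}) (phi : Spec S -> X),
               relBetti qX f phi -> eta S f phi = g \o phi]).
Proof.
move=> X Y qX qY hX hY cqX cqY; split.
  by move=> g1 g2 _ _ _ _; exact: (faithful hR qY).
move=> eta heta; exists (g hR qX eta); split.
- exact: (@g_cont R hR X Y qX qY hX hY cqX eta heta).
- by apply: funext => y /=; exact: qYg.
- move=> S f phi rb; apply: funext => P /=; exact: (pointwise hR hX hY heta rb).
Qed.
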